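(* In the setting of the joint threshold-based policy in which $D$ knows that $S$ uses this policy with threshold $P_S$, the per-slot success probability $\phi(P_S)=[1-p(P_{tx})]\,\Psi(P_S,P_D)$ is maximized over $P_S>P_{C,S}$ by the threshold $P_S^*>P_{C,S}$ satisfying $$\exp\Big[-\frac{(2^R-1)(1+\alpha)z}{P_S^*-P_{C,S}}\Big]=\frac{\lambda_S}{P_S^*}.$$
   Context: Parameters: rate $R>0$, noise $z>0$, $\alpha>0$, circuit power $P_{C,S}\ge0$, energy arrival means $\lambda_S,\lambda_D>0$, receive energy $P_D>0$. For threshold $P_S>P_{C,S}$, $P_{tx}=(P_S-P_{C,S})/(1+\alpha)$ and $p(P_{tx})=1-\exp(-(2^R-1)z/P_{tx})$. Under the joint threshold-based policy where $D$ knows $S$'s policy (both nodes act in a slot iff $B_S^t\ge P_S$, $B_D^t\ge P_D$ and the channel is not in outage; infinite batteries, stationary ergodic energy arrivals), the simultaneous activity probability is $\Psi(P_S,P_D)=\min\big(1,\frac{\lambda_S}{[1-p(P_{tx})]P_S},\frac{\lambda_D}{[1-p(P_{tx})]P_D}\big)$. *)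

(* Defs.v *)
From Stdlib Require Import Reals.
Open Scope R_scope.

(* Rate is called [Rt] to avoid clashing with the type [R]. *)

Definition Ptx (alpha PCS PS : R) : R := (PS - PCS) / (1 + alpha).

Definition pout (Rt z P : R) : R := 1 - exp (- ((Rpower 2 Rt - 1) * z / P)).

Definition Psi (Rt z alpha PCS lamS lamD PS PD : R) : R :=
  let q := 1 - pout Rt z (Ptx alpha PCS PS) in
  Rmin 1 (Rmin (lamS / (q * PS)) (lamD / (q * PD))).

Definition phi (Rt z alpha PCS lamS lamD PD PS : R) : R :=
  (1 - pout Rt z (Ptx alpha PCS PS)) * Psi Rt z alpha PCS lamS lamD PS PD.

Definition opt_eq (Rt z alpha PCS lamS PS : R) : Prop :=
  exp (- ((Rpower 2 Rt - 1) * (1 + alpha) * z / (PS - PCS))) = lamS / PS.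

(* Main.v *)
Require Import Defs.
From Stdlib Require Import Reals Lra.
Open Scope R_scope.

Lemma Rmin_mul q x y : 0 < q -> q * Rmin x y = Rmin (q * x) (q * y).
Proof.
  intros Hq; unfold Rmin; destruct (Rle_dec x y), (Rle_dec (q*x) (q*y)); try reflexivity.
  - exfalso; apply n; apply Rmult_le_compat_l; lra.
  - exfalso; apply n; apply Rmult_le_reg_l with q; lra.
Qed.

Lemma phi_eq Rt z alpha PCS lamS lamD PD PS :
  0 < alpha -> PCS < PS -> 0 <= PCS -> 0 < PD ->
  phi Rt z alpha PCS lamS lamD PD PS =
  Rmin (exp (- ((Rpower 2 Rt - 1) * (1 + alpha) * z / (PS - PCS))))
       (Rmin (lamS / PS) (lamD / PD)).
Proof.
  intros ha hP hPC hPD.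
  unfold phi, Psi, pout, Ptx.
  replace ((Rpower 2 Rt - 1) * z / ((PS - PCS) / (1 + alpha)))
    with ((Rpower 2 Rt - 1) * (1 + alpha) * z / (PS - PCS)) by (field; lra).
  set (q := exp (- ((Rpower 2 Rt - 1) * (1 + alpha) * z / (PS - PCS)))).
  replace (1 - (1 - q)) with q by ring.
  assert (Hq : 0 < q) by apply exp_pos.
  rewrite !Rmin_mul by exact Hq.
  f_equal; [ring|]. f_equal; field; lra.
Qed.

Lemma Rmin_le_l a b : Rmin a b <= a.
Proof. apply Rmin_l. Qed.

Theorem corollary4 (Rt z alpha PCS lamS lamD PD : R)
  (hR : 0 < Rt) (hz : 0 < z) (ha : 0 < alpha) (hPC : 0 <= PCS)
  (hlS : 0 < lamS) (hlD : 0 < lamD) (hPD : 0 < PD) :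
  (exists PSs, PCS < PSs /\ opt_eq Rt z alpha PCS lamS PSs) /\
  (forall PSs, PCS < PSs -> opt_eq Rt z alpha PCS lamS PSs ->
     forall PS, PCS < PS ->
       phi Rt z alpha PCS lamS lamD PD PS <= phi Rt z alpha PCS lamS lamD PD PSs).
Proof.
  assert (H2 : 1 < Rpower 2 Rt).
  { rewrite <- (Rpower_O 2) by lra. apply Rpower_lt; lra. }
  set (c := (Rpower 2 Rt - 1) * (1 + alpha) * z).
  assert (hc : 0 < c).
  { unfold c. apply Rmult_lt_0_compat; [apply Rmult_lt_0_compat|]; lra. }
  split.
  - set (g := fun P => exp (- (c / (P - PCS))) - lamS / P).
    set (ta := lamS * c / (lamS * c + PCS + 1)).
    set (tb := c + lamS + 1).
    assert (hlc : 0 < lamS * c) by (apply Rmult_lt_0_compat; lra).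
    assert (hta : 0 < ta) by (unfold ta; apply Rdiv_lt_0_compat; lra).
    assert (hta1 : ta < 1).
    { unfold ta. apply (Rmult_lt_reg_r (lamS * c + PCS + 1)); [lra|].
      field_simplify; lra. }
    assert (hta2 : ta * (PCS + 1) < lamS * c).
    { unfold ta. apply (Rmult_lt_reg_r (lamS * c + PCS + 1)); [lra|].
      field_simplify; [|lra]. nra. }
    assert (Ha : g (PCS + ta) < 0).
    { unfold g. replace (PCS + ta - PCS) with ta by ring.
      assert (E1 : 1 + c / ta <= exp (c / ta)) by apply exp_ineq1_le.
      assert (hct : 0 < c / ta) by (apply Rdiv_lt_0_compat; lra).
      rewrite exp_Ropp.
      assert (E2 : / exp (c / ta) <= / (1 + c / ta)).
      { apply Rinv_le_contravar; lra. }
      assert (E3 : / (1 + c / ta) < lamS / (PCS + ta)).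
      { replace (/ (1 + c / ta)) with (ta / (ta + c)) by (field; lra).
        apply (Rmult_lt_reg_r ((ta + c) * (PCS + ta))). nra.
        field_simplify; [|lra|lra]. nra. }
      lra. }
    assert (Hb : 0 < g (PCS + tb)).
    { unfold g. replace (PCS + tb - PCS) with tb by ring.
      assert (E1 : 1 + - (c / tb) <= exp (- (c / tb))) by apply exp_ineq1_le.
      assert (E3 : lamS / (PCS + tb) <= lamS / tb).
      { apply Rmult_le_compat_l; [lra|]. apply Rinv_le_contravar; unfold tb; lra. }
      assert (E4 : lamS / tb < 1 - c / tb).
      { unfold tb. apply (Rmult_lt_reg_r (c + lamS + 1)); [lra|].
        field_simplify; lra. }
      lra. }
    destruct (Ranalysis5.IVT_interv g (PCS + ta) (PCS + tb)) as [x [Hx Hgx]].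
    + intros a0 Ha0. unfold g. reg; lra.
    + unfold tb; lra.
    + exact Ha.
    + exact Hb.
    + exists x. split; [lra|]. unfold opt_eq. fold c. unfold g in Hgx.
      lra.
  - intros PSs HPs Hopt PS HPS.
    rewrite !phi_eq by lra.
    unfold opt_eq in Hopt. fold c in Hopt. fold c. rewrite Hopt.
    assert (K : Rmin (exp (- (c / (PS - PCS)))) (Rmin (lamS / PS) (lamD / PD)) <= lamS / PSs).
    { destruct (Rle_dec PS PSs).
      + eapply Rle_trans; [apply Rmin_l|]. rewrite <- Hopt.
        destruct (Req_dec PS PSs) as [->|Hne]; [lra|].
        left. apply exp_increasing. apply Ropp_lt_contravar.
        apply Rmult_lt_compat_l; [lra|]. apply Rinv_lt_contravar; [nra|lra].
      + eapply Rle_trans; [apply Rmin_r|]. eapply Rle_trans; [apply Rmin_l|].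
        apply Rmult_le_compat_l; [lra|]. apply Rinv_le_contravar; lra. }
    apply Rmin_glb; [exact K|]. apply Rmin_glb; [exact K|].
    eapply Rle_trans; [apply Rmin_r|]. apply Rmin_r.
Qed.
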